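(* Let $f,g:[a;b]\to\mathbb{R}$ be two regulated functions. Let $[c;d]\subset[a;b]$, let $c=t_0<t_1<\ldots<t_n=d$ be any partition of $[c;d]$, and let $\xi_0=c$ and $\xi_1,\ldots,\xi_n$ be such that $t_{i-1}\le\xi_i\le t_i$ for $i=1,2,\ldots,n$. Let $\delta_{-1}:=\sup_{c\le t\le d}|f(t)-f(c)|$, and let $\delta_0\ge\delta_1\ge\ldots\ge\delta_r\ge0$ and $\varepsilon_0\ge\varepsilon_1\ge\ldots\ge\varepsilon_r\ge0$. Then \[ \left|\sum_{i=1}^{n}f(\xi_i)\left[g(t_i)-g(t_{i-1})\right]-f(c)\left[g(d)-g(c)\right]\right| \le\sum_{k=0}^{r}2^{k}\delta_{k-1}\cdot TV(g,[c;d],\varepsilon_k)+\sum_{k=0}^{r}2^{k}\varepsilon_k\cdot TV(f,[c;d],\delta_k)+n\delta_r\varepsilon_r. \]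
   Context: A function $h:[a;b]\to\mathbb{R}$ is regulated if the one-sided finite limits $\lim_{t\to a+}h(t)$, $\lim_{t\to b-}h(t)$ exist and, for every $x\in(a;b)$, both finite limits $\lim_{t\to x-}h(t)$ and $\lim_{t\to x+}h(t)$ exist. The total variation of $h$ on $[c;d]$ is $TV(h,[c;d],0)=\sup_n\sup_{c\le t_1<\dots<t_n\le d}\sum_{i=2}^{n}|h(t_i)-h(t_{i-1})|$. For $\delta\ge0$, the truncated variation of $h$ on $[c;d]$ is $TV(h,[c;d],\delta):=\inf\{TV(u,[c;d],0): \sup_{c\le t\le d}|h(t)-u(t)|\le\delta/2\}$; for regulated $h$ and $\delta>0$ it equals $\sup_n\sup_{c\le t_1<\dots<t_n\le d}\sum_{i=2}^{n}\max\{|h(t_i)-h(t_{i-1})|-\delta,0\}$. *)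

(* Defs.v *)
From HB Require Import structures.
From mathcomp Require Import all_boot all_order all_algebra.
From mathcomp Require Import all_classical all_reals all_analysis.
Set Implicit Arguments. Unset Strict Implicit. Unset Printing Implicit Defensive.
Import Order.TTheory GRing.Theory Num.Theory.
Import numFieldNormedType.Exports.
Local Open Scope classical_set_scope.
Local Open Scope ring_scope.

Definition regulated (R : realType) (h : R -> R) (a b : R) : Prop :=
  (exists l : R, h t @[t --> a^'+] --> l) /\
  (exists l : R, h t @[t --> b^'-] --> l) /\
  (forall x, a < x < b ->
     (exists l : R, h t @[t --> x^'-] --> l) /\ (exists l : R, h t @[t --> x^'+] --> l)).

Definition var_sum (R : realType) (h : R -> R) (s : seq R) : R :=
  \sum_(1 <= i < size s) `|h (nth 0 s i) - h (nth 0 s i.-1)|.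

Definition TV0 (R : realType) (h : R -> R) (c d : R) : \bar R :=
  ereal_sup [set (var_sum h s)%:E | s in
     [set s : seq R | sorted <%R s /\ all (fun t => c <= t <= d) s]].

Definition TV (R : realType) (h : R -> R) (c d delta : R) : \bar R :=
  ereal_inf [set TV0 u c d | u in
     [set u : R -> R | forall t, c <= t <= d -> `|h t - u t| <= delta / 2]].

(* Main.v *)
Require Import Defs.
From HB Require Import structures.
From mathcomp Require Import all_boot all_order all_algebra.
From mathcomp Require Import all_classical all_reals all_analysis.
From mathcomp Require Import ring lra.
Import Order.TTheory GRing.Theory Num.Theory.
Import numFieldNormedType.Exports.
Local Open Scope classical_set_scope.
Local Open Scope ring_scope.
Set Implicit Arguments. Unset Strict Implicit. Unset Printing Implicit Defensive.

Section TVlemmas.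
Variables (R : realType) (c d : R).

Lemma var_sum_nil (h : R -> R) : var_sum h [::] = 0.
Proof. by rewrite /var_sum big_geq. Qed.

Lemma TV0_ge0 (h : R -> R) : (0 <= TV0 h c d)%E.
Proof.
apply: ereal_sup_ubound; exists [::]; last by rewrite var_sum_nil.
by split.
Qed.

Lemma var_sum_rcons (h : R -> R) (s : seq R) y : (0 < size s)%N ->
  var_sum h (rcons s y) = var_sum h s + `|h y - h (last 0 s)|.
Proof.
move=> s0; rewrite /var_sum size_rcons big_nat_recr //=.
congr (_ + _).
  apply: eq_big_nat => i /andP[_ hi].
  by rewrite !nth_rcons hi (leq_ltn_trans (leq_pred i) hi).
rewrite nth_rcons ltnn eqxx nth_rcons prednK // leqnn -nth_last.
by case: (size s) s0.
Qed.

Lemma TV0_mono_seq (h : R -> R) (x : nat -> R) m :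
  (forall i, (i < m)%N -> x i <= x i.+1) ->
  (forall i, (i <= m)%N -> c <= x i <= d) ->
  ((\sum_(0 <= i < m) `|h (x i.+1) - h (x i)|)%:E <= TV0 h c d)%E.
Proof.
move=> xinc xin.
suff [s [ss sa sl sv]] : exists s, [/\ sorted <%R (x 0%N :: s),
   all (fun t => c <= t <= d) (x 0%N :: s), last (x 0%N) s = x m &
   \sum_(0 <= i < m) `|h (x i.+1) - h (x i)| <= var_sum h (x 0%N :: s)].
  apply: (@le_trans _ _ (var_sum h (x 0%N :: s))%:E); first by rewrite lee_fin.
  by apply: ereal_sup_ubound; exists (x 0%N :: s).
elim: m xinc xin => [|m IH] xinc xin.
  exists [::]; split => //=; first by rewrite xin.
  by rewrite big_geq // /var_sum big_geq.
have [s [ss sa sl sv]] := IH (fun i hi => xinc i (ltnW hi)) (fun i hi => xin i (leqW hi)).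
have := xinc m (ltnSn m); rewrite le_eqVlt => /predU1P[e|lt].
  exists s; split => //; first by rewrite sl.
  by rewrite big_nat_recr //= e subrr normr0 addr0.
exists (rcons s (x m.+1)); split.
- by rewrite /= rcons_path; move: ss => /= ->; rewrite sl lt.
- by rewrite -rcons_cons all_rcons sa xin.
- by rewrite last_rcons.
- rewrite -rcons_cons var_sum_rcons // big_nat_recr //= lerD //.
  by rewrite sl.
Qed.

Lemma var_sum_sub (u v : R -> R) s :
  var_sum (fun x => u x - v x) s <= var_sum u s + var_sum v s.
Proof.
rewrite /var_sum -big_split /=; apply: ler_sum => i _.
rewrite (_ : _ - _ = (u (nth 0 s i) - u (nth 0 s i.-1)) - (v (nth 0 s i) - v (nth 0 s i.-1))); last by ring.
exact: ler_normB.
Qed.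

Lemma TV0_sub (u v : R -> R) :
  (TV0 (fun x => (u x - v x)%R) c d <= TV0 u c d + TV0 v c d)%E.
Proof.
apply: ge_ereal_sup => _ [s hs <-].
apply: le_trans (_ : ((var_sum u s)%:E + (var_sum v s)%:E <= _)%E).
  by rewrite -EFinD lee_fin var_sum_sub.
by apply: leeD; apply: ereal_sup_ubound; exists s.
Qed.

Lemma TV_ge0 (h : R -> R) e : (0 <= TV h c d e)%E.
Proof. by apply: le_ereal_inf_tmp => _ [u _ <-]; exact: TV0_ge0. Qed.

Lemma TV_mono (h : R -> R) e e' : e <= e' -> (TV h c d e' <= TV h c d e)%E.
Proof.
move=> ee; apply: ereal_inf_le_tmp => _ [u hu <-]; exists u => //.
move=> t ht; apply: le_trans (hu t ht) _.
by rewrite ler_pM2r // invr_gt0 ltr0n.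
Qed.

Lemma TV_approx (h : R -> R) e eta : 0 <= e -> 0 < eta ->
  exists u, (forall t, c <= t <= d -> `|h t - u t| <= e / 2) /\
            (TV0 u c d <= TV h c d e + eta%:E)%E.
Proof.
move=> e0 eta0.
have [hinf|hfin] := eqVneq (TV h c d e) +oo%E.
  exists h; split; last by rewrite hinf addye // leey.
  by move=> t _; rewrite subrr normr0 divr_ge0.
have hf : TV h c d e \is a fin_num.
  by rewrite fin_numE hfin andbT; apply/eqP => hh; have := TV_ge0 h e; rewrite hh.
have [_ [u hu <-] lt] := lb_ereal_inf_adherent eta0 hf.
by exists u; split => //; exact: ltW.
Qed.

Lemma TV_sub (h v : R -> R) e : 0 <= e ->
  (TV (fun x => (h x - v x)%R) c d e <= TV h c d e + TV0 v c d)%E.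
Proof.
move=> e0; apply/lee_addgt0Pr => eta eta0.
have [u [hu hu2]] := TV_approx h e0 eta0.
apply: (@le_trans _ _ (TV0 (fun x => (u x - v x)%R) c d)).
  apply: ereal_inf_lbound; exists (fun x => u x - v x) => //.
  move=> t ht; have -> : h t - v t - (u t - v t) = h t - u t by ring.
  exact: hu.
apply: le_trans (TV0_sub u v) _.
rewrite -addeA (addeC (TV0 v c d)) addeA leeD2r //.
Qed.

End TVlemmas.
Lemma abel (R : realType) (a b : nat -> R) n :
  \sum_(1 <= i < n.+1) (a i - a 0%N) * (b i - b i.-1) =
  \sum_(0 <= i < n) (b n - b i) * (a i.+1 - a i).
Proof.
elim: n => [|n IH]; first by rewrite !big_geq.
rewrite big_nat_recr //= IH.
have -> : \sum_(0 <= i < n.+1) (b n.+1 - b i) * (a i.+1 - a i)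
   = (b n.+1 - b n) * \sum_(0 <= i < n.+1) (a i.+1 - a i)
     + \sum_(0 <= i < n.+1) (b n - b i) * (a i.+1 - a i).
  by rewrite mulr_sumr -big_split /=; apply: eq_bigr => i _; ring.
rewrite telescope_sumr // [in RHS]big_nat_recr //= subrr mul0r addr0; ring.
Qed.

Lemma rearr3 (R : realType) (a b c e f : \bar R) :
  ((a + e) + (b + f) + c = a + b + c + (e + f))%E.
Proof. by rewrite addeACA (addeAC (a + b)). Qed.
Lemma rearr4 (R : realType) (a b c d e f g h : \bar R) :
  ((a + e) + (b + f) + (c + d + g + h) = (a + c) + (b + d) + g + (e + f + h))%E.
Proof.
rewrite -!addeA; congr (_ + _).
rewrite (addeCA f c) (addeCA b c) (addeCA e c); congr (_ + _).
rewrite (addeCA e b); congr (_ + _).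
rewrite (addeCA f d) (addeCA e d); congr (_ + _).
by rewrite (addeCA f g) (addeCA e g).
Qed.

Section RS.
Variables (R : realType) (c d : R) (n : nat) (t xi : nat -> R).
Hypotheses (ht0 : t 0%N = c) (htn : t n = d)
  (htinc : forall i, (i < n)%N -> t i < t i.+1) (hxi0 : xi 0%N = c)
  (hxi : forall i, (1 <= i <= n)%N -> t i.-1 <= xi i <= t i).

Definition Q (F H : R -> R) :=
  \sum_(1 <= i < n.+1) (F (xi i) - F c) * (H (t i) - H (t i.-1)).

Lemma t_ge i : (i <= n)%N -> c <= t i.
Proof.
elim: i => [|i IH] hi; first by rewrite ht0.
by apply: le_trans (IH (ltnW hi)) (ltW (htinc hi)).
Qed.

Lemma t_le_aux k i : (i + k = n)%N -> t i <= d.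
Proof.
elim: k i => [|k IH] i hik; first by rewrite addn0 in hik; rewrite -htn hik.
have hi : (i < n)%N by rewrite -hik addnS ltnS leq_addr.
apply: le_trans (ltW (htinc hi)) (IH i.+1 _); by rewrite addSnnS.
Qed.

Lemma t_le i : (i <= n)%N -> t i <= d.
Proof. by move=> hi; apply: (@t_le_aux (n - i)); rewrite subnKC. Qed.

Lemma t_in i : (i <= n)%N -> c <= t i <= d.
Proof. by move=> hi; rewrite t_ge // t_le. Qed.

Lemma xi_in i : (i <= n)%N -> c <= xi i <= d.
Proof.
case: i => [|i] hi; first by rewrite hxi0 lexx -ht0 t_le.
have /andP[h1 h2] := @hxi i.+1 hi.
by rewrite (le_trans (t_ge (ltnW hi)) h1) (le_trans h2 (t_le hi)).
Qed.

Lemma xi_inc i : (i < n)%N -> xi i <= xi i.+1.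
Proof.
move=> hi; have /andP[h1 _] := @hxi i.+1 hi.
apply: le_trans _ h1; case: i hi => [|i] hi; first by rewrite hxi0 ht0.
by have /andP[] := @hxi i.+1 (ltnW hi).
Qed.

Lemma QsubR F H G : Q F (fun x => H x - G x) = Q F H - Q F G.
Proof. by rewrite /Q -sumrB; apply: eq_bigr => i _; ring. Qed.

Lemma QsubL F P H : Q (fun x => F x - P x) H = Q F H - Q P H.
Proof. by rewrite /Q -sumrB; apply: eq_bigr => i _; ring. Qed.

Lemma E1 F G D : 0 <= D ->
  (forall i, (1 <= i <= n)%N -> `|F (xi i) - F c| <= D) ->
  ((`|Q F G|)%:E <= D%:E * TV0 G c d)%E.
Proof.
move=> D0 hF.
have h1 : `|Q F G| <= D * \sum_(0 <= i < n) `|G (t i.+1) - G (t i)|.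
  rewrite /Q big_add1 /=.
  apply: le_trans (ler_norm_sum _ _ _) _; rewrite mulr_sumr.
  apply: ler_sum_nat => i /andP[_ hi]; rewrite normrM ler_wpM2r //.
  by apply: hF.
apply: le_trans (_ : ((D * \sum_(0 <= i < n) `|G (t i.+1) - G (t i)|)%:E <= _)%E).
  by rewrite lee_fin.
rewrite EFinM; apply: lee_pmul => //.
  by rewrite lee_fin sumr_ge0.
apply: TV0_mono_seq => i hi; first exact: ltW (htinc hi).
exact: t_in.
Qed.

Lemma E2 P H E : 0 <= E ->
  (forall i, (i <= n)%N -> `|H d - H (t i)| <= E) ->
  ((`|Q P H|)%:E <= E%:E * TV0 P c d)%E.
Proof.
move=> E0 hH.
have -> : Q P H = \sum_(0 <= i < n) (H d - H (t i)) * (P (xi i.+1) - P (xi i)).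
  by rewrite -htn -(abel (fun i => P (xi i)) (fun i => H (t i))) /= hxi0.
have h1 : `|\sum_(0 <= i < n) (H d - H (t i)) * (P (xi i.+1) - P (xi i))|
    <= E * \sum_(0 <= i < n) `|P (xi i.+1) - P (xi i)|.
  apply: le_trans (ler_norm_sum _ _ _) _; rewrite mulr_sumr.
  apply: ler_sum_nat => i /andP[_ hi]; rewrite normrM ler_wpM2r //.
  by apply: hH; exact: ltnW.
apply: le_trans (_ : ((E * \sum_(0 <= i < n) `|P (xi i.+1) - P (xi i)|)%:E <= _)%E).
  by rewrite lee_fin.
rewrite EFinM; apply: lee_pmul => //.
  by rewrite lee_fin sumr_ge0.
apply: TV0_mono_seq => i hi; first exact: xi_inc.
exact: xi_in.
Qed.

Lemma E3 F H D E :
  (forall i, (1 <= i <= n)%N -> `|F (xi i) - F c| <= D) ->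
  (forall i, (1 <= i <= n)%N -> `|H (t i) - H (t i.-1)| <= E) ->
  `|Q F H| <= n%:R * D * E.
Proof.
move=> hF hH.
apply: le_trans (ler_norm_sum _ _ _) _.
apply: le_trans (_ : \sum_(1 <= i < n.+1) (D * E) <= _).
  apply: ler_sum_nat => i hi; rewrite normrM.
  by apply: ler_pM => //; [apply: hF|apply: hH].
by rewrite sumr_const_nat subn1 /= -mulrA mulr_natl.
Qed.


Lemma c_le_d : c <= d.
Proof. by rewrite -ht0 t_le. Qed.

Lemma step F H D d0 e0 eta : 0 <= D -> 0 <= d0 -> 0 <= e0 -> 0 < eta ->
  (forall i, (1 <= i <= n)%N -> `|F (xi i) - F c| <= D) ->
  exists F' H', [/\ (forall i, (1 <= i <= n)%N -> `|F' (xi i) - F' c| <= d0),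
   (forall i, (1 <= i <= n)%N -> `|H' (t i) - H' (t i.-1)| <= e0),
   (forall e, 0 <= e -> (TV H' c d e <= TV H c d e + (TV H c d e0 + eta%:E))%E),
   (forall e, 0 <= e -> (TV F' c d e <= TV F c d e + (TV F c d d0 + eta%:E))%E) &
   ((`|Q F H|)%:E <= D%:E * (TV H c d e0 + eta%:E)
        + e0%:E * (TV F c d d0 + eta%:E) + (`|Q F' H'|)%:E)%E].
Proof.
move=> D0 d00 e00 eta0 hF.
have [G [hG hG2]] := @TV_approx R c d H e0 eta e00 eta0.
have [P [hP hP2]] := @TV_approx R c d F d0 eta d00 eta0.
have cin : c <= c <= d by rewrite lexx c_le_d.
exists (fun x => F x - P x), (fun x => H x - G x); split.
- move=> i /andP[i1 i2] /=.
  have h1 := hP (xi i) (xi_in i2); have h2 := hP c cin.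
  apply: le_trans (ler_normB _ _) _; lra.
- move=> i /andP[i1 i2] /=.
  have h1 := hG (t i) (t_in i2).
  have h2 := hG (t i.-1) (t_in (leq_trans (leq_pred i) i2)).
  apply: le_trans (ler_normB _ _) _; lra.
- move=> e e0'; apply: le_trans (@TV_sub R c d H G e e0') _.
  exact: leeD2l.
- move=> e e0'; apply: le_trans (@TV_sub R c d F P e e0') _.
  exact: leeD2l.
have eq1 : Q F H = Q F G + Q P (fun x => H x - G x)
    + Q (fun x => F x - P x) (fun x => H x - G x).
  by rewrite QsubL !QsubR; ring.
rewrite eq1.
apply: (@le_trans _ _ ((`|Q F G|)%:E + (`|Q P (fun x => H x - G x)|)%:E
    + (`|Q (fun x => F x - P x) (fun x => H x - G x)|)%:E)%E).
  rewrite -!EFinD lee_fin.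
  by apply: le_trans (ler_normD _ _) _; rewrite lerD2r ler_normD.
apply: leeD; last exact: lexx.
apply: leeD.
  apply: le_trans (E1 G D0 hF) _.
  exact: lee_wpmul2l.
apply: le_trans (@E2 P (fun x => H x - G x) e0 e00 _) _.
  move=> i hi /=.
  have h1 := hG (t n) (t_in (leqnn n)); rewrite htn in h1.
  have h2 := hG (t i) (t_in hi).
  apply: le_trans (ler_normB _ _) _; lra.
exact: lee_wpmul2l.
Qed.

Lemma expand (D al be eta : R) (T Tg : \bar R) : 0 <= D -> 0 <= al -> 0 <= be ->
  0 <= eta -> (0 <= Tg)%E -> (T <= al%:E * Tg + be%:E)%E ->
  (D%:E * (T + eta%:E) <= (D * al)%:E * Tg + (D * (be + eta))%:E)%E.
Proof.
move=> D0 a0 b0 e0 Tg0 hT.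
apply: (@le_trans _ _ (D%:E * (al%:E * Tg + (be + eta)%:E))%E).
  apply: lee_wpmul2l; first by rewrite lee_fin.
  by rewrite EFinD addeA leeD2r.
rewrite ge0_muleDr ?mule_ge0 ?lee_fin ?addr_ge0 //.
by rewrite muleA -!EFinM.
Qed.

Lemma dbl (al be eta : R) (T T0 X X0 : \bar R) : 0 <= al -> (0 <= X)%E ->
  (X0 <= X)%E -> (T <= al%:E * X + be%:E)%E -> (T0 <= al%:E * X0 + be%:E)%E ->
  (T + (T0 + eta%:E) <= (2 * al)%:E * X + (2 * be + eta)%:E)%E.
Proof.
move=> a0 X0' hX hT hT0.
apply: (@le_trans _ _ ((al%:E * X + be%:E) + ((al%:E * X + be%:E) + eta%:E))%E).
  apply: leeD => //; apply: leeD2r; apply: le_trans hT0 _; apply: leeD2r.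
  by apply: lee_wpmul2l => //; rewrite lee_fin.
have -> : ((2 * al)%:E * X = al%:E * X + al%:E * X)%E.
  rewrite -ge0_muleDl ?lee_fin // -EFinD; congr (_ * _)%E; congr EFin; ring.
have -> : ((2 * be + eta)%:E = be%:E + be%:E + eta%:E)%E.
  by rewrite -!EFinD; congr EFin; ring.
by rewrite -!addeA (addeCA be%:E).
Qed.

Lemma nonincr_mono (s : nat -> R) r : (forall k, (k < r)%N -> s k.+1 <= s k) ->
  forall j k, (k <= j)%N -> (j <= r)%N -> s j <= s k.
Proof.
move=> hs; elim=> [|j IH] k hkj hjr.
  by rewrite leqn0 in hkj; rewrite (eqP hkj).
rewrite leq_eqVlt in hkj; case/orP: hkj => [/eqP -> //|hkj].
exact: le_trans (hs j hjr) (IH k hkj (ltnW hjr)).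
Qed.

Lemma claim (f g : R -> R) r : forall (F H : R -> R) (dl ep : nat -> R) (D al be eta M : R),
  0 < eta -> 0 <= al -> 0 <= be -> 0 <= D ->
  (forall k, (k < r)%N -> dl k.+1 <= dl k) -> 0 <= dl r ->
  (forall k, (k < r)%N -> ep k.+1 <= ep k) -> 0 <= ep r ->
  D <= M -> dl 0%N <= M -> ep 0%N <= M ->
  (forall i, (1 <= i <= n)%N -> `|F (xi i) - F c| <= D) ->
  (forall j, (j <= r)%N -> (TV H c d (ep j) <= al%:E * TV g c d (ep j) + be%:E)%E) ->
  (forall j, (j <= r)%N -> (TV F c d (dl j) <= al%:E * TV f c d (dl j) + be%:E)%E) ->
  ((`|Q F H|)%:E <=
     \sum_(0 <= k < r.+1) ((al * 2 ^+ k)%:E * (if k is k'.+1 then dl k' else D)%:E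
                            * TV g c d (ep k))
   + \sum_(0 <= k < r.+1) ((al * 2 ^+ k * ep k)%:E * TV f c d (dl k))
   + (n%:R * dl r * ep r)%:E + ((be + eta) * M * 4 ^+ r.+1)%:E)%E.
Proof.
elim: r => [|r IH] F H dl ep D al be eta M eta0 al0 be0 D0 hdl hdlr hep hepr
    DM dlM epM hF hH hFf.
- have [F' [H' [hF' hH' _ _ hQ]]] := @step F H _ _ _ _ D0 hdlr hepr eta0 hF.
  have hQ3 := E3 hF' hH'.
  rewrite !big_nat1.
  apply: le_trans hQ _.
  have h1 := expand D0 al0 be0 (ltW eta0) (@TV_ge0 R c d g (ep 0%N)) (hH 0%N (leqnn 0)).
  have h2 := expand hepr al0 be0 (ltW eta0) (@TV_ge0 R c d f (dl 0%N)) (hFf 0%N (leqnn 0)).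
  apply: le_trans (leeD (leeD h1 h2)
     (_ : ((`|Q F' H'|)%:E <= (n%:R * dl 0%N * ep 0%N)%:E)%E)) _.
    by rewrite lee_fin.
  rewrite rearr3; apply: leeD.
    by rewrite expr0 mulr1 -EFinM (mulrC al D) (mulrC al (ep 0%N)).
  rewrite -EFinD lee_fin expr1.
  have y0 : 0 <= be + eta by lra.
  have h3 : D * (be + eta) <= M * (be + eta) by rewrite ler_wpM2r.
  have h4 : ep 0%N * (be + eta) <= M * (be + eta) by rewrite ler_wpM2r.
  have h5 : 0 <= M * (be + eta) by rewrite mulr_ge0 // (le_trans D0 DM).
  nra.
- have dl0 : 0 <= dl 0%N := le_trans hdlr (nonincr_mono hdl (leq0n r.+1) (leqnn _)).
  have ep0 : 0 <= ep 0%N := le_trans hepr (nonincr_mono hep (leq0n r.+1) (leqnn _)).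
  have [F' [H' [hF' hH' hTH' hTF' hQ]]] := @step F H _ _ _ _ D0 dl0 ep0 eta0 hF.
  have a0' : 0 <= 2 * al by rewrite mulr_ge0.
  have b0' : 0 <= 2 * be + eta by lra.
  have hdl' : forall k, (k < r)%N -> dl k.+2 <= dl k.+1 by move=> k hk; apply: hdl.
  have hep' : forall k, (k < r)%N -> ep k.+2 <= ep k.+1 by move=> k hk; apply: hep.
  have dlM' : dl 1%N <= M := le_trans (hdl 0%N (ltn0Sn r)) dlM.
  have epM' : ep 1%N <= M := le_trans (hep 0%N (ltn0Sn r)) epM.
  have hH'' : forall j, (j <= r)%N -> (TV H' c d (ep j.+1) <=
      (2 * al)%:E * TV g c d (ep j.+1) + (2 * be + eta)%:E)%E.
    move=> j hj.
    have e0j : 0 <= ep j.+1 := le_trans hepr (@nonincr_mono ep r.+1 hep r.+1 j.+1 hj (leqnn _)).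
    apply: le_trans (hTH' _ e0j) _.
    apply: (@dbl _ _ _ _ _ _ (TV g c d (ep 0%N))) => //; first exact: TV_ge0.
    - by apply: TV_mono; exact: (@nonincr_mono ep r.+1 hep j.+1 0%N (leq0n _) hj).
    - exact: hH.
    - exact: hH.
  have hF'' : forall j, (j <= r)%N -> (TV F' c d (dl j.+1) <=
      (2 * al)%:E * TV f c d (dl j.+1) + (2 * be + eta)%:E)%E.
    move=> j hj.
    have e0j : 0 <= dl j.+1 := le_trans hdlr (@nonincr_mono dl r.+1 hdl r.+1 j.+1 hj (leqnn _)).
    apply: le_trans (hTF' _ e0j) _.
    apply: (@dbl _ _ _ _ _ _ (TV f c d (dl 0%N))) => //; first exact: TV_ge0.
    - by apply: TV_mono; exact: (@nonincr_mono dl r.+1 hdl j.+1 0%N (leq0n _) hj).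
    - exact: hFf.
    - exact: hFf.
  have IH' := IH F' H' (fun k => dl k.+1) (fun k => ep k.+1) (dl 0%N) (2 * al)
     (2 * be + eta) eta M eta0 a0' b0' dl0 hdl' hdlr hep' hepr dlM dlM' epM' hF' hH'' hF''.
  rewrite (big_nat_recl r.+1) // (big_nat_recl r.+1) //.
  apply: le_trans hQ _.
  have h1 := expand D0 al0 be0 (ltW eta0) (@TV_ge0 R c d g (ep 0%N)) (hH 0%N (leq0n _)).
  have h2 := expand ep0 al0 be0 (ltW eta0) (@TV_ge0 R c d f (dl 0%N)) (hFf 0%N (leq0n _)).
  apply: le_trans (leeD (leeD h1 h2) IH') _.
  rewrite rearr4; apply: leeD; first apply: leeD; first apply: leeD.
  + apply: leeD.
      by rewrite expr0 mulr1 -EFinM (mulrC al D).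
    apply: lee_sum => k _.
    have -> : al * 2 ^+ k.+1 = 2 * al * 2 ^+ k by rewrite exprS; ring.
    by case: k.
  + apply: leeD.
      by rewrite expr0 mulr1 (mulrC al (ep 0%N)).
    apply: lee_sum => k _.
    have -> : al * 2 ^+ k.+1 * ep k.+1 = 2 * al * 2 ^+ k * ep k.+1 by rewrite exprS; ring.
    by [].
  + by [].
  rewrite -!EFinD lee_fin.
  have y0 : 0 <= be + eta by lra.
  have h3 : D * (be + eta) <= M * (be + eta) by rewrite ler_wpM2r.
  have h4 : ep 0%N * (be + eta) <= M * (be + eta) by rewrite ler_wpM2r.
  have h5 : 0 <= M * (be + eta) by rewrite mulr_ge0 // (le_trans D0 DM).
  have hX : 1 <= 4 ^+ r.+1 :> R by rewrite exprn_ege1 // ler1n.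
  rewrite (exprS _ r.+1).
  move: hX; set X := 4 ^+ r.+1 => hX.
  nra.
Qed.

End RS.
Lemma fin_max (R : realType) (a : nat -> R) (B : \bar R) n : (0 <= B)%E ->
  (forall i, (1 <= i <= n)%N -> ((`|a i|)%:E <= B)%E) ->
  exists D, [/\ 0 <= D, (forall i, (1 <= i <= n)%N -> `|a i| <= D) & (D%:E <= B)%E].
Proof.
elim: n => [|n IH] h0 h.
  exists 0; split => //; move=> i /andP[i1 i2].
  by move: (leq_trans i1 i2).
have [D [D0 hD hDB]] : exists D, [/\ 0 <= D,
    (forall i, (1 <= i <= n)%N -> `|a i| <= D) & (D%:E <= B)%E].
  apply: IH => // i /andP[i1 i2]; apply: h; rewrite i1 /=; exact: leqW.
have hn := h n.+1 (leqnn _).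
case: (leP D `|a n.+1|) => hle.
  exists `|a n.+1|; split => // i /andP[i1 i2].
  rewrite leq_eqVlt in i2; case/orP: i2 => [/eqP -> //|i2].
  by apply: le_trans (hD i _) hle; rewrite i1.
exists D; split => // i /andP[i1 i2].
rewrite leq_eqVlt in i2; case/orP: i2 => [/eqP -> |i2]; first exact: ltW.
by apply: hD; rewrite i1.
Qed.

Unset Implicit Arguments.
Theorem lemma1 (R : realType) (f g : R -> R) (a b c d : R) (n r : nat)
    (t xi : nat -> R) (delta eps : nat -> R) :
  a < b ->
  regulated f a b -> regulated g a b ->
  a <= c -> d <= b ->
  t 0%N = c -> t n = d -> (forall i, (i < n)%N -> t i < t i.+1) ->
  xi 0%N = c -> (forall i, (1 <= i <= n)%N -> t i.-1 <= xi i <= t i) ->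
  (forall k, (k < r)%N -> delta k.+1 <= delta k) -> 0 <= delta r ->
  (forall k, (k < r)%N -> eps k.+1 <= eps k) -> 0 <= eps r ->
  let deltam1 := ereal_sup [set (`|f s - f c|)%:E | s in [set s | c <= s <= d]] in
  ((`| \sum_(1 <= i < n.+1) f (xi i) * (g (t i) - g (t i.-1)) - f c * (g d - g c) |)%:E
   <= \sum_(0 <= k < r.+1)
         ((2 ^+ k)%:E * (if k is k'.+1 then (delta k')%:E else deltam1) * TV g c d (eps k))
      + \sum_(0 <= k < r.+1) ((2 ^+ k * eps k)%:E * TV f c d (delta k))
      + (n%:R * delta r * eps r)%:E)%E.
Proof.
move=> ab regf regg ac db ht0 htn htinc hxi0 hxi hdl hdlr hep hepr.
cbv zeta; set deltam1 := ereal_sup _.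
have eqQ : \sum_(1 <= i < n.+1) f (xi i) * (g (t i) - g (t i.-1)) - f c * (g d - g c)
    = Q c n t xi f g.
  rewrite /Q.
  have -> : g d - g c = \sum_(1 <= i < n.+1) (g (t i) - g (t i.-1)).
    by rewrite big_add1 /= telescope_sumr // htn ht0.
  rewrite mulr_sumr -sumrB; apply: eq_bigr => i _; ring.
rewrite eqQ.
have [D [D0 hF hDd]] : exists D, [/\ 0 <= D,
    (forall i, (1 <= i <= n)%N -> `|f (xi i) - f c| <= D) & (D%:E <= deltam1)%E].
  apply: fin_max.
    apply: ereal_sup_ubound; exists c; last by rewrite subrr normr0.
    have := t_le htn htinc (leq0n n); rewrite ht0 => cd.
    by rewrite /= cd andbT lexx.
  move=> i /andP[i1 i2].
  apply: ereal_sup_ubound; exists (xi i) => //.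
  exact: (xi_in ht0 htn htinc hxi0 hxi).
have dl0 : 0 <= delta 0%N := le_trans hdlr (nonincr_mono hdl (leq0n r) (leqnn _)).
have ep0 : 0 <= eps 0%N := le_trans hepr (nonincr_mono hep (leq0n r) (leqnn _)).
set M := D + delta 0%N + eps 0%N.
have DM : D <= M by rewrite /M; lra.
have dlM : delta 0%N <= M by rewrite /M; lra.
have epM : eps 0%N <= M by rewrite /M; lra.
have X0 : 0 <= 4 ^+ r.+1 :> R by rewrite exprn_ge0.
have P0 : 0 <= M * 4 ^+ r.+1 by rewrite mulr_ge0 // /M; lra.
apply/lee_addgt0Pr => e e0.
set eta := e / (M * 4 ^+ r.+1 + 1).
have eta0 : 0 < eta by rewrite /eta divr_gt0 //; lra.
have hslack : (0 + eta) * M * 4 ^+ r.+1 <= e.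
  rewrite add0r -mulrA /eta mulrAC ler_pdivrMr; last by lra.
  by rewrite ler_wpM2l ?(ltW e0) //; lra.
have hH : forall j, (j <= r)%N ->
    (TV g c d (eps j) <= 1%:E * TV g c d (eps j) + 0%:E)%E.
  by move=> j _; rewrite mul1e adde0.
have hFf : forall j, (j <= r)%N ->
    (TV f c d (delta j) <= 1%:E * TV f c d (delta j) + 0%:E)%E.
  by move=> j _; rewrite mul1e adde0.
have hC := @claim R c d n t xi ht0 htn htinc hxi0 hxi f g r f g delta eps D 1 0 eta M
  eta0 ler01 (lexx 0) D0 hdl hdlr hep hepr DM dlM epM hF hH hFf.
apply: le_trans hC _.
apply: leeD; last by rewrite lee_fin.
apply: leeD; last exact: lexx.
apply: leeD.
- apply: lee_sum => k _; rewrite mul1r.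
  apply: lee_wpmul2r; first exact: TV_ge0.
  apply: lee_wpmul2l; first by rewrite lee_fin exprn_ge0.
  by case: k.
- by apply: lee_sum => k _; rewrite mul1r.
Qed.
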